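(* For $k\ge 0$ let $B_k$ denote the family of bar $k$-visibility graphs. Then for all $i,j\ge 0$ with $i\ne j$, $B_i\not\subseteq B_j$ and $B_j\not\subseteq B_i$.
   Context: A bar $k$-visibility representation is a finite collection of pairwise disjoint closed horizontal line segments (bars) in the plane; two bars are joined by a line of sight if there is a vertical segment with endpoints on the two bars intersecting at most $k$ other bars. The bar $k$-visibility graph has one vertex per bar, two vertices adjacent iff their bars are joined by a line of sight. *)

(* Defs.v *)
From Stdlib Require Import Reals.
From mathcomp Require Import all_boot.

Set Implicit Arguments.
Unset Strict Implicit.
Unset Printing Implicit Defensive.

(* A (non-degenerate) closed horizontal segment [bx1, bx2] x {by}. *)
Record bar : Type := Bar { by_ : R ; bx1 : R ; bx2 : R ; bar_nondeg : Rlt bx1 bx2 }.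

Definition on_bar (b : bar) (p : R * R) : Prop :=
  p.2 = by_ b /\ Rle (bx1 b) p.1 /\ Rle p.1 (bx2 b).

Definition on_vseg (x y1 y2 : R) (p : R * R) : Prop :=
  p.1 = x /\ Rle (Rmin y1 y2) p.2 /\ Rle p.2 (Rmax y1 y2).

Definition bars_disjoint (a b : bar) : Prop :=
  ~ exists p, on_bar a p /\ on_bar b p.

Definition line_of_sight (k : nat) (T : finType) (f : T -> bar) (u v : T) : Prop :=
  exists x y1 y2 : R,
    on_bar (f u) (x, y1) /\ on_bar (f v) (x, y2) /\
    exists s : seq T, size s <= k /\
      forall c : T, c != u -> c != v ->
        (exists p, on_bar (f c) p /\ on_vseg x y1 y2 p) -> c \in s.

Definition simple_graph (T : finType) (e : rel T) : Prop :=
  symmetric e /\ irreflexive e.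

(* (T, e) is a bar k-visibility graph (the class B_k, closed under isomorphism
   since the vertex type is arbitrary): there is a bar representation, one bar
   per vertex, pairwise disjoint, with adjacency = line of sight. *)
Definition bar_k_visibility_graph (k : nat) (T : finType) (e : rel T) : Prop :=
  exists f : T -> bar,
    (forall u v : T, u != v -> bars_disjoint (f u) (f v)) /\
    (forall u v : T, e u v <-> (u != v /\ line_of_sight k f u v)).

(* Main.v *)
Require Import Defs.
From Stdlib Require Import Reals Lra Lia ClassicalEpsilon Classical.
From mathcomp Require Import all_boot.
From mathcomp Require Import zify.

Set Implicit Arguments.
Unset Strict Implicit.
Unset Printing Implicit Defensive.



Definition mkbar (h l r : nat) : bar.
refine (@Bar (INR h) (INR l) (INR (maxn r l.+1)) _).
apply lt_INR; apply/ltP; by rewrite leq_max ltnSn orbT.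
Defined.

Lemma minmaxP (a b c : R) :
  Rle (Rmin a b) c /\ Rle c (Rmax a b) <-> (Rle a c /\ Rle c b) \/ (Rle b c /\ Rle c a).
Proof. unfold Rmin, Rmax; destruct (Rle_dec a b); lra. Qed.

Lemma INR_leb m n : Rle (INR m) (INR n) <-> m <= n.
Proof. split; [move/INR_le/leP => //| move/leP/le_INR => //]. Qed.

Lemma los_sym k (T : finType) (f : T -> bar) u v :
  line_of_sight k f u v -> line_of_sight k f v u.
Proof.
move=> [x [y1 [y2 [H1 [H2 [s [Hs Hb]]]]]]].
exists x, y2, y1; split => //; split => //; exists s; split => //.
move=> c cv cu [p [Hp Hv]]; apply: Hb => //; exists p; split => //.
move: Hv; rewrite /on_vseg Rmin_comm Rmax_comm //.
Qed.

Lemma los_nat (k : nat) (T : finType) (hg lf rg : T -> nat)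
  (Hlr : forall w, lf w < rg w) (u v : T) (X : nat) (s : seq T) :
  lf u <= X <= rg u -> lf v <= X <= rg v -> size s <= k ->
  (forall c, c != u -> c != v -> lf c <= X <= rg c ->
     (hg u <= hg c <= hg v) \/ (hg v <= hg c <= hg u) -> c \in s) ->
  line_of_sight k (fun w => mkbar (hg w) (lf w) (rg w)) u v.
Proof.
have Em w : maxn (rg w) (lf w).+1 = rg w by apply/maxn_idPl; apply: Hlr.
move=> /andP[Hu1 Hu2] /andP[Hv1 Hv2] Hs Hb.
exists (INR X), (INR (hg u)), (INR (hg v)).
rewrite /on_bar /= !Em !INR_leb; split; first by split => //; apply/andP.
split; first by split => //; apply/andP.
exists s; split => //.
move=> c cu cv [[px py] [[/= Hy [H1 H2]] [/= Hx Hm]]]; subst.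
move: H1 H2; rewrite Em !INR_leb => H1 H2.
apply: Hb => //; first by apply/andP.
move/minmaxP: Hm; rewrite !INR_leb; case=> [[]|[]]; [left|right]; apply/andP; by split.
Qed.



Lemma los_iota k n (hg lf rg : 'I_n.+1 -> nat) (Hlr : forall w, lf w < rg w)
  (u v : 'I_n.+1) X a b :
  lf u <= X <= rg u -> lf v <= X <= rg v -> b - a <= k ->
  (forall c : 'I_n.+1, c != u -> c != v -> lf c <= X <= rg c ->
     (hg u <= hg c <= hg v) \/ (hg v <= hg c <= hg u) -> a <= c < b) ->
  line_of_sight k (fun w => mkbar (hg w) (lf w) (rg w)) u v.
Proof.
move=> Hu Hv Hab Hb.
apply: (@los_nat k _ hg lf rg Hlr u v X (map inord (iota a (b - a)))) => //.
  by rewrite size_map size_iota.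
move=> c cu cv Hc Hh; have := Hb c cu cv Hc Hh => Hc2.
rewrite -(inord_val c); apply: map_f; rewrite mem_iota; lia.
Qed.

Definition Nm (k : nat) := 4 * k + 3.
Definition tL (k c : nat) := if c <= k then c else if c <= 2*k+1 then 2*k+2+c else 5*k+4-c.
Definition tR (k c : nat) := if c <= k then 3*k+3+c else if c <= 3*k+2 then c else c - (3*k+3).
Definition clf k (c : 'I_(Nm k).+1) := tL k c.
Definition crg k (c : 'I_(Nm k).+1) := 3 * (Nm k).+1 - tR k c.
Definition chg k (c : 'I_(Nm k).+1) := nat_of_ord c.

Lemma tL_lt k c : c < (Nm k).+1 -> tL k c < (Nm k).+1.
Proof. rewrite /tL /Nm; repeat case: ifP => ?; lia. Qed.
Lemma tR_lt k c : c < (Nm k).+1 -> tR k c < (Nm k).+1.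
Proof. rewrite /tR /Nm; repeat case: ifP => ?; lia. Qed.

Lemma cHlr k (w : 'I_(Nm k).+1) : clf w < crg w.
Proof. have := tL_lt (ltn_ord w); have := tR_lt (ltn_ord w); rewrite /clf /crg; lia. Qed.

Definition fcl k (w : 'I_(Nm k).+1) := mkbar (chg w) (clf w) (crg w).

Lemma clique_lt (k : nat) (u v : 'I_(Nm k).+1) : u < v -> line_of_sight k (@fcl k) u v.
Proof.
move=> uv; have vN := ltn_ord v; have uN := ltn_ord u.
have EN : (Nm k).+1 = 4*k+4 by rewrite /Nm; lia.
have Hne (c w : 'I_(Nm k).+1) : c != w -> nat_of_ord c != nat_of_ord w by [].
rewrite /fcl.
have center : v <= u + k + 1 -> line_of_sight k (fun w => mkbar (chg w) (clf w) (crg w)) u v.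
  move=> Hg; apply: (@los_iota k _ (@chg k) (@clf k) (@crg k) (@cHlr k) u v (2 * (Nm k).+1) u.+1 v).
  - have := tL_lt uN; have := tR_lt uN; rewrite /clf /crg; lia.
  - have := tL_lt vN; have := tR_lt vN; rewrite /clf /crg; lia.
  - lia.
  - move=> c /Hne cu /Hne cv _ Hb; rewrite /chg in Hb; lia.
case: (boolP (v <= u + k + 1)) => [/center //|Hng].
case: (boolP (u <= k)) => Hu.
  case: (boolP (v <= 2*k+1)) => Hv.
  -
    apply: (@los_iota k _ (@chg k) (@clf k) (@crg k) (@cHlr k) u v (crg u) (k+1) v).
    + have := tL_lt uN; rewrite /clf /crg /tL /tR in uN vN *; repeat case: ifP => ?; lia.
    + rewrite /clf /crg /tL /tR in uN vN *; repeat case: ifP => ?; lia.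
    + lia.
    + move=> c /Hne cu /Hne cv; have cN := ltn_ord c; rewrite /chg /clf /crg /tL /tR in uN vN cN *.
      repeat case: ifP => ?; lia.
  -
    apply: (@los_iota k _ (@chg k) (@clf k) (@crg k) (@cHlr k) u v (clf v) u.+1 k.+1).
    + rewrite /clf /crg /tL /tR in uN vN *; repeat case: ifP => ?; lia.
    + have := tR_lt vN; rewrite /clf /crg /tL /tR in uN vN *; repeat case: ifP => ?; lia.
    + lia.
    + move=> c /Hne cu /Hne cv; have cN := ltn_ord c; rewrite /chg /clf /crg /tL /tR in uN vN cN *.
      repeat case: ifP => ?; lia.
case: (boolP (v <= 3*k+2)) => Hv.
  -
    apply: (@los_iota k _ (@chg k) (@clf k) (@crg k) (@cHlr k) u v (clf u) (2*k+2) v).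
    + have := tR_lt uN; rewrite /clf /crg /tL /tR in uN vN *; repeat case: ifP => ?; lia.
    + rewrite /clf /crg /tL /tR in uN vN *; repeat case: ifP => ?; lia.
    + lia.
    + move=> c /Hne cu /Hne cv; have cN := ltn_ord c; rewrite /chg /clf /crg /tL /tR in uN vN cN *.
      repeat case: ifP => ?; lia.
  -
    apply: (@los_iota k _ (@chg k) (@clf k) (@crg k) (@cHlr k) u v (crg u) (3*k+3) v).
    + have := tL_lt uN; rewrite /clf /crg /tL /tR in uN vN *; repeat case: ifP => ?; lia.
    + rewrite /clf /crg /tL /tR in uN vN *; repeat case: ifP => ?; lia.
    + lia.
    + move=> c /Hne cu /Hne cv; have cN := ltn_ord c; rewrite /chg /clf /crg /tL /tR in uN vN cN *.
      repeat case: ifP => ?; lia.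
Qed.



Definition Rltb (a b : R) : bool := if Rlt_dec a b then true else false.
Definition Rleb (a b : R) : bool := if Rle_dec a b then true else false.
Lemma RltbP a b : Rltb a b = true <-> Rlt a b.
Proof. rewrite /Rltb; case: Rlt_dec => //. Qed.
Lemma RlebP a b : Rleb a b = true <-> Rle a b.
Proof. rewrite /Rleb; case: Rle_dec => //. Qed.

Lemma list_max (A : eqType) (F : A -> R) (x : A) (s : seq A) :
  exists2 a, a \in x :: s & forall b, b \in x :: s -> Rle (F b) (F a).
Proof.
elim: s x => [|y s IH] x.
  exists x; first by rewrite inE eqxx.
  by move=> b; rewrite inE => /eqP ->; apply: Rle_refl.
have [a Ha Hm] := IH y.
case: (Rle_dec (F x) (F a)) => H.
  exists a; first by rewrite inE Ha orbT.
  by move=> b; rewrite inE => /orP[/eqP -> //|/Hm //].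
exists x; first by rewrite inE eqxx.
move=> b; rewrite inE => /orP[/eqP -> |/Hm]; [apply: Rle_refl| lra].
Qed.

Lemma no_big_clique (i : nat) (T : finType) (g : T -> bar) :
  4 * i + 5 < #|T| ->
  (forall u v, u != v -> bars_disjoint (g u) (g v)) ->
  (forall u v, u != v -> line_of_sight i g u v) -> False.
Proof.
move=> HN Hdis Hvis.
have : 0 < #|T| by lia.
case/card_gt0P => t0 _.
have [w _ Hw] := list_max (fun u => bx1 (g u)) t0 (enum T).
set x0 := bx1 (g w).
have Hx0 u : Rle (bx1 (g u)) x0 /\ Rle x0 (bx2 (g u)).
  split; first by apply: Hw; rewrite inE mem_enum orbT.
  case: (eqVneq u w) => [E|uw]; first by rewrite E; have := bar_nondeg (g w); rewrite /x0; lra.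
  have [x [y1 [y2 [[_ [H1 H2]] [[_ [H3 H4]] _]]]]] := Hvis w u (negbT (introF eqP (fun E => (elimN eqP uw) (esym E)))).
  rewrite /= in H1 H4; rewrite /x0; lra.
pose y u := by_ (g u).
have Hy u v : y u = y v -> u = v.
  move=> E; apply/eqP; apply/negPn/negP => uv.
  apply: (Hdis u v uv); exists (x0, y u); split.
  - split => //; exact: Hx0.
  - split; first by rewrite /= E.
    exact: Hx0.
pose rk u := #|[set z | Rltb (y z) (y u)]|.
have rk_lt u v : Rlt (y u) (y v) -> rk u < rk v.
  move=> H; apply: proper_card; apply/properP; split.
  - apply/subsetP => z; rewrite !inE => /RltbP Hz; apply/RltbP; lra.
  - exists u; rewrite !inE; first by apply/RltbP.
    apply/negP => /RltbP; lra.
have rk_lt' u v : rk u < rk v -> Rlt (y u) (y v).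
  move=> H; case: (Rtotal_order (y u) (y v)) => [//|[E|H']].
  - by rewrite (Hy _ _ E) in H; lia.
  - have := rk_lt _ _ H'; lia.
have rk_inj : injective rk.
  move=> u v E; case: (Rtotal_order (y u) (y v)) => [H|[H|H]].
  - have := rk_lt _ _ H; lia.
  - exact: Hy.
  - have := rk_lt _ _ H; lia.
have rk_N u : rk u < #|T|.
  rewrite -cardsT; apply: proper_card; apply/properP; split.
    by apply/subsetP => z; rewrite inE.
  exists u; first by rewrite inE.
  rewrite inE; apply/negP => /RltbP; lra.
have rk_onto a : a < #|T| -> exists u, rk u = a.
  move=> Ha.
  have Hs : {subset map rk (enum T) <= iota 0 #|T|}.
    move=> z /mapP [u _ ->]; rewrite mem_iota add0n; exact: rk_N.
  have Hsz : size (iota 0 #|T|) <= size (map rk (enum T)) by rewrite size_map size_iota -cardE.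
  have Uq : uniq (map rk (enum T)) by rewrite map_inj_uniq // enum_uniq.
  have [_ Heq] := uniq_min_size Uq Hs Hsz.
  have : a \in iota 0 #|T| by rewrite mem_iota; lia.
  by rewrite -Heq => /mapP [u _ ->]; exists u.
pose U a := odflt t0 [pick u | rk u == a].
have rkU a : a < #|T| -> rk (U a) = a.
  move=> Ha; rewrite /U; case: pickP => [u /eqP //|H].
  have [u Hu] := rk_onto a Ha; have := H u; by rewrite Hu eqxx.
pose h := 2 * i + 3.
pose P a x := exists y1 y2 : R, on_bar (g (U a)) (x, y1) /\ on_bar (g (U (a + h))) (x, y2) /\
   exists s : seq T, size s <= i /\ forall c, c != U a -> c != U (a + h) ->
     (exists p, on_bar (g c) p /\ on_vseg x y1 y2 p) -> c \in s.
pose xw a := epsilon (inhabits R0) (P a).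
have Pxw a : a < h -> P a (xw a).
  move=> Ha; apply: epsilon_spec; apply: Hvis.
  apply/negP => /eqP E; have := rkU a; have := rkU (a + h); rewrite E; lia.
have core (F : seq nat) (a0 : nat) : uniq F -> {subset F <= iota 0 h} -> i + 2 <= size F -> a0 \in F ->
   (forall a, a \in F -> (Rle (bx1 (g (U a))) (xw a0) /\ Rle (xw a0) (bx2 (g (U a)))) /\
                        (Rle (bx1 (g (U (a + h)))) (xw a0) /\ Rle (xw a0) (bx2 (g (U (a + h)))))) -> False.
  move=> UF sF szF a0F Hc.
  have a0h : a0 < h by have := sF _ a0F; rewrite mem_iota; lia.
  have [y1 [y2 [[Ey1 _] [[Ey2 _] [s [Hs Hb]]]]]] := Pxw a0 a0h.
  rewrite /= in Ey1 Ey2.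
  pose B a := if a < a0 then U (a + h) else U a.
  have rkB a : a < h -> rk (B a) = if a < a0 then a + h else a.
    by rewrite /B; case: ifP => _ Ha; apply: rkU; lia.
  have rkU0 : rk (U a0) = a0 by apply: rkU; lia.
  have rkU1 : rk (U (a0 + h)) = a0 + h by apply: rkU; lia.
  have Bin a : a \in F -> a != a0 -> B a \in s.
    move=> aF aa0; have ah : a < h by have := sF _ aF; rewrite mem_iota; lia.
    have rB := rkB a ah.
    apply: Hb.
    - apply/negP => /eqP E; move: rB; rewrite E rkU0; case: ifP; lia.
    - apply/negP => /eqP E; move: rB; rewrite E rkU1; case: ifP; lia.
    - exists (xw a0, y (B a)); split.
      + split => //; rewrite /B; case: ifP => _; have := Hc a aF; tauto.
      + split => //=.
        have lt1 : Rlt y1 (y (B a)) by rewrite Ey1; apply: rk_lt'; rewrite rB rkU0; case: ifP; lia.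
        have lt2 : Rlt (y (B a)) y2 by rewrite Ey2; apply: rk_lt'; rewrite rB rkU1; case: ifP; lia.
        apply/minmaxP; left; lra.
  have Hsub : {subset map B (rem a0 F) <= s}.
    move=> z /mapP [a aF ->]; move: aF; rewrite (mem_rem_uniq _ UF) inE => /andP[aa0 aF].
    exact: Bin.
  have Uniq : uniq (map B (rem a0 F)).
    rewrite map_inj_in_uniq ?rem_uniq //.
    move=> a b aF bF E.
    have ah : a < h by move: aF => /mem_rem /sF; rewrite mem_iota; lia.
    have bh : b < h by move: bF => /mem_rem /sF; rewrite mem_iota; lia.
    have := rkB a ah; have := rkB b bh; rewrite E; case: ifP; case: ifP; lia.
  have := leq_trans (uniq_leq_size Uniq Hsub) Hs; rewrite size_map size_rem // -subn1 => HH.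
  have H2 : size F - 1 <= i := HH.
  lia.
pose Lf := [seq a <- iota 0 h | Rleb (xw a) x0].
pose Rg := [seq a <- iota 0 h | ~~ Rleb (xw a) x0].
have Hsz : size Lf + size Rg = h.
  by rewrite !size_filter (count_predC (fun a => Rleb (xw a) x0)) size_iota.
have uL : uniq Lf by apply: filter_uniq; apply: iota_uniq.
have uR : uniq Rg by apply: filter_uniq; apply: iota_uniq.
have sL : {subset Lf <= iota 0 h} by move=> z; rewrite mem_filter => /andP[].
have sR : {subset Rg <= iota 0 h} by move=> z; rewrite mem_filter => /andP[].
have ih a : a \in iota 0 h -> a < h by rewrite mem_iota; lia.
case: (leqP (i + 2) (size Lf)) => HL.
  case EL : Lf HL => [|a1 s1] HL; first by move: HL; rewrite /=; lia.
  have [a0 a0F Hm] := list_max xw a1 s1.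
  rewrite -EL in a0F Hm.
  apply: (core Lf a0) => //; first by rewrite EL.
  move=> a aF.
  have Ha := Hm a aF.
  have ax : Rle (xw a0) x0 by move: a0F; rewrite mem_filter => /andP[/RlebP].
  have [y1 [y2 [[_ [H1 H2]] [[_ [H3 H4]] _]]]] := Pxw a (ih a (sL a aF)).
  rewrite /= in H1 H2 H3 H4; have := Hx0 (U a); have := Hx0 (U (a + h)); lra.
have HR : i + 2 <= size Rg by lia.
case ER : Rg HR => [|a1 s1] HR; first by move: HR; rewrite /=; lia.
have [a0 a0F Hm] := list_max (fun a => Ropp (xw a)) a1 s1.
rewrite -ER in a0F Hm.
apply: (core Rg a0) => //; first by rewrite ER.
move=> a aF.
have Ha := Hm a aF.
have ax : Rlt x0 (xw a0).
  move: a0F; rewrite mem_filter => /andP[H _]; case: (Rlt_le_dec x0 (xw a0)) => // H'.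
  by move/RlebP: H'; rewrite (negbTE H).
have [y1 [y2 [[_ [H1 H2]] [[_ [H3 H4]] _]]]] := Pxw a (ih a (sR a aF)).
rewrite /= in H1 H2 H3 H4; have := Hx0 (U a); have := Hx0 (U (a + h)); lra.
Qed.



Definition in_range (b : bar) (x : R) := Rle (bx1 b) x /\ Rle x (bx2 b).

Lemma sep (j : nat) (T : finType) (g : T -> bar) (e : rel T)
  (He : forall u v : T, e u v <-> (u != v /\ line_of_sight j g u v))
  (Hdis : forall u v : T, u != v -> bars_disjoint (g u) (g v))
  (ex : seq T) (u v w z : T) :
  size ex < j -> (forall t, t \in ex \/ t = u \/ t = v \/ t = w \/ t = z) ->
  u != v -> w != z -> w != u -> w != v -> z != u -> z != v ->
  ~~ e u v -> ~~ e w z ->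
  forall x, in_range (g u) x -> in_range (g v) x -> False.
Proof.
move=> Hsz Hcov uv wz wu wv zu zv euv ewz x [Hu1 Hu2] [Hv1 Hv2].
pose yu := by_ (g u); pose yv := by_ (g v).
have meets (t t' : T) : t != u -> t != v -> t' != u -> t' != v -> t != t' ->
   (forall r, r \in ex \/ r = u \/ r = v \/ r = t \/ r = t') ->
   exists p, on_bar (g t) p /\ on_vseg x yu yv p.
  move=> tu tv t'u t'v tt' Hc.
  case: (classic (exists p, on_bar (g t) p /\ on_vseg x yu yv p)) => // NM.
  have : e u v.
    apply/He; split => //.
    exists x, yu, yv; split; first by split.
    split; first by split.
    exists (t' :: ex); split; first by rewrite /=; lia.
    move=> c cu cv Hm.
    case: (Hc c) => [H|[E|[E|[E|E]]]].
    - by rewrite inE H orbT.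
    - by rewrite E eqxx in cu.
    - by rewrite E eqxx in cv.
    - by subst c; case: NM.
    - by rewrite E inE eqxx.
  by rewrite (negbTE euv).
have Hcov' : forall r, r \in ex \/ r = u \/ r = v \/ r = z \/ r = w.
  by move=> r; case: (Hcov r); tauto.
have zw : z != w by rewrite eq_sym.
have [[pw1 pw2] [[/= Ew [Hw1 Hw2]] [/= Ew' Hwm]]] := meets w z wu wv zu zv wz Hcov.
have [[pz1 pz2] [[/= Ez [Hz1 Hz2]] [/= Ez' Hzm]]] := meets z w zu zv wu wv zw Hcov'.
subst pw1 pw2 pz1 pz2.
have neq (s t : T) : s != t -> in_range (g s) x -> in_range (g t) x -> by_ (g s) <> by_ (g t).
  move=> st [Hs1 Hs2] [Ht1 Ht2] E; apply: (Hdis s t st); exists (x, by_ (g s)); split.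
  - by split.
  - by split => //=; rewrite E.
have rw : in_range (g w) x by split.
have rz : in_range (g z) x by split.
have ru : in_range (g u) x by split.
have rv : in_range (g v) x by split.
have n1 := neq w u wu rw ru.
have n2 := neq w v wv rw rv.
have n3 := neq z u zu rz ru.
have n4 := neq z v zv rz rv.
move/minmaxP: Hwm => Hwm; move/minmaxP: Hzm => Hzm.
rewrite /yu /yv in Hwm Hzm.
have : e w z.
  apply/He; split => //.
  exists x, (by_ (g w)), (by_ (g z)); split; first by split.
  split; first by split.
  exists ex; split; first by lia.
  move=> c cw cz [[p1 p2] [[/= Ec [Hc1 Hc2]] [/= Ep Hcm]]]; subst p1 p2.
  move/minmaxP: Hcm => Hcm.
  case: (Hcov c) => [//|[E|[E|[E|E]]]].
  - subst c; exfalso; lra.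
  - subst c; exfalso; lra.
  - by rewrite E eqxx in cw.
  - by rewrite E eqxx in cz.
by rewrite (negbTE ewz).
Qed.

Lemma c4_obstruct (j : nat) (T : finType) (e : rel T) (a b c d : T) (ex : seq T) :
  size ex < j -> (forall t, t \in ex \/ t = a \/ t = b \/ t = c \/ t = d) ->
  a != b -> a != c -> a != d -> b != c -> b != d -> c != d ->
  e a b -> e b c -> e c d -> e d a -> ~~ e a c -> ~~ e b d ->
  ~ bar_k_visibility_graph j e.
Proof.
move=> Hsz Hcov ab ac ad bc bd cd eab ebc ecd eda eac ebd [g [Hdis He]].
have ov u v : e u v -> exists x, in_range (g u) x /\ in_range (g v) x.
  move/He => [_ [x [y1 [y2 [[_ [H1 H2]] [[_ [H3 H4]] _]]]]]].
  by exists x; split; split.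
have ns (s t : T) : s != t -> t != s by rewrite eq_sym.
have Sac := sep He Hdis Hsz (u:=a) (v:=c) (w:=b) (z:=d)
  (fun t => ltac:(case: (Hcov t); tauto)) ac bd (ns _ _ ab) bc (ns _ _ ad) (ns _ _ cd) eac ebd.
have Sbd := sep He Hdis Hsz (u:=b) (v:=d) (w:=a) (z:=c)
  (fun t => ltac:(case: (Hcov t); tauto)) bd ac ab ad (ns _ _ bc) cd ebd eac.
have [x1 [[A1 A2] [B1 B2]]] := ov _ _ eab.
have [x2 [[B3 B4] [C1 C2]]] := ov _ _ ebc.
have [x3 [[C3 C4] [D1 D2]]] := ov _ _ ecd.
have [x4 [[D3 D4] [A3 A4]]] := ov _ _ eda.
case: (Rle_dec (bx1 (g c)) (bx2 (g a))) => H1.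
  case: (Rle_dec (bx1 (g a)) (bx2 (g c))) => H2.
    apply: (Sac (Rmax (bx1 (g a)) (bx1 (g c)))); split;
      try apply: Rmax_l; try apply: Rmax_r; apply: Rmax_lub; lra.
  apply: (Sbd (bx2 (g c))); split; lra.
apply: (Sbd (bx2 (g a))); split; lra.
Qed.



Lemma mkbar_disj h1 l1 r1 h2 l2 r2 : h1 <> h2 -> bars_disjoint (mkbar h1 l1 r1) (mkbar h2 l2 r2).
Proof.
move=> H [p [[E1 _] [E2 _]]]; apply: H; apply: INR_eq.
by rewrite /= in E1 E2; rewrite -E1 -E2.
Qed.

Lemma nonlos_nat (k : nat) (T : finType) (hg lf rg : T -> nat)
  (Hlr : forall w, lf w < rg w) (u v : T) (L : seq T) :
  uniq L -> k < size L ->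
  (forall w, w \in L -> [/\ w != u, w != v,
       (hg u <= hg w <= hg v) \/ (hg v <= hg w <= hg u),
       (lf w <= lf u) \/ (lf w <= lf v) & (rg u <= rg w) \/ (rg v <= rg w)]) ->
  ~ line_of_sight k (fun w => mkbar (hg w) (lf w) (rg w)) u v.
Proof.
have Em w : maxn (rg w) (lf w).+1 = rg w by apply/maxn_idPl; apply: Hlr.
move=> UL HL HW [x [y1 [y2 [[/= Ey1 [Hu1 Hu2]] [[/= Ey2 [Hv1 Hv2]] [s [Hs Hb]]]]]]].
rewrite !Em in Hu2 Hv2.
have Hsub : {subset L <= s}.
  move=> w wL; have [wu wv Hh Hl Hr] := HW w wL.
  apply: Hb => //; exists (x, INR (hg w)); split.
  - split => //=; rewrite Em; split.
    + case: Hl => /INR_leb H; lra.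
    + case: Hr => /INR_leb H; lra.
  - split => //=; apply/minmaxP; rewrite Ey1 Ey2 !INR_leb.
    case: Hh => /andP[H1 H2]; [left|right]; split => //.
have H2 : size L <= k := leq_trans (uniq_leq_size UL Hsub) Hs.
lia.
Qed.

Definition dec (P : Prop) : bool := if excluded_middle_informative P then true else false.
Lemma decP (P : Prop) : dec P = true <-> P.
Proof. rewrite /dec; case: excluded_middle_informative => //. Qed.
Lemma dec_iff (P Q : Prop) : (P <-> Q) -> dec P = dec Q.
Proof.
move=> H; rewrite /dec; destruct (excluded_middle_informative P) as [p|p]; destruct (excluded_middle_informative Q) as [q|q] => //; exfalso; tauto.
Qed.

Definition c4h (i v : nat) := if v == 0 then i+2 else if v == 1 then 1 else if v == 2 then 0
   else if v == 3 then i+3 else v - 2.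
Definition c4l (v : nat) := if v == 0 then 0 else if v == 1 then 1 else if v == 2 then 2
   else if v == 3 then 0 else 1.
Definition c4r (v : nat) := if v == 0 then 4 else if v == 1 then 4 else if v == 2 then 6
   else if v == 3 then 5 else 4.
Definition hc4 i (w : 'I_(i.+3).+1) := c4h i w.
Definition lc4 i (w : 'I_(i.+3).+1) := c4l w.
Definition rc4 i (w : 'I_(i.+3).+1) := c4r w.
Definition fc4 i (w : 'I_(i.+3).+1) := mkbar (hc4 w) (lc4 w) (rc4 w).
Definition ec4 i : rel 'I_(i.+3).+1 := fun u v => dec (u != v /\ line_of_sight i (@fc4 i) u v).

Lemma Hlr4 i (w : 'I_(i.+3).+1) : lc4 w < rc4 w.
Proof. rewrite /lc4 /rc4 /c4l /c4r; repeat case: ifP => ?; lia. Qed.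

Definition vA i : 'I_(i.+3).+1 := @Ordinal (i.+3).+1 0 isT.
Definition vB i : 'I_(i.+3).+1 := @Ordinal (i.+3).+1 1 isT.
Definition vC i : 'I_(i.+3).+1 := @Ordinal (i.+3).+1 2 isT.
Definition vD i : 'I_(i.+3).+1 := @Ordinal (i.+3).+1 3 isT.
Definition exs i : seq 'I_(i.+3).+1 := map inord (iota 4 i).

Lemma exsP i (w : 'I_(i.+3).+1) : w \in exs i -> 4 <= w.
Proof.
move=> /mapP [n]; rewrite mem_iota => Hn ->; rewrite inordK; lia.
Qed.

Lemma exs_uniq i : uniq (exs i).
Proof.
rewrite map_inj_in_uniq ?iota_uniq // => m n; rewrite !mem_iota => Hm Hn E.
have := congr1 (@nat_of_ord _) E; rewrite !inordK; lia.
Qed.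

Lemma exs_cover i (t : 'I_(i.+3).+1) :
  t \in exs i \/ t = vA i \/ t = vB i \/ t = vC i \/ t = vD i.
Proof.
case: (leqP 4 t) => Ht.
  left; apply/mapP; exists (nat_of_ord t); last by rewrite inord_val.
  by rewrite mem_iota; have := ltn_ord t; lia.
right; have Hv (n : nat) (w : 'I_(i.+3).+1) : nat_of_ord t = n -> nat_of_ord w = n -> t = w.
  by move=> E1 E2; apply: val_inj; rewrite /= E1 E2.
case: (ltnP t 1) => H1; first by left; apply: Hv 0 _ _ _; [lia|].
case: (ltnP t 2) => H2; first by right; left; apply: Hv 1 _ _ _; [lia|].
case: (ltnP t 3) => H3; first by right; right; left; apply: Hv 2 _ _ _; [lia|].
by right; right; right; apply: Hv 3 _ _ _; [lia|].
Qed.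

Lemma exs_mem i (t : 'I_(i.+3).+1) : 4 <= t -> t \in exs i.
Proof.
move=> Ht; apply/mapP; exists (nat_of_ord t); last by rewrite inord_val.
by rewrite mem_iota; have := ltn_ord t; lia.
Qed.

Lemma disj4 i (u v : 'I_(i.+3).+1) : u != v -> bars_disjoint (fc4 u) (fc4 v).
Proof.
move=> uv; have uv' : nat_of_ord u != nat_of_ord v := uv.
apply: mkbar_disj; have := ltn_ord u; have := ltn_ord v.
rewrite /hc4 /c4h; repeat case: ifP => ?; lia.
Qed.

Ltac unf4 := rewrite /hc4 /lc4 /rc4 /c4h /c4l /c4r /=.

Lemma eAB i : line_of_sight i (@fc4 i) (vA i) (vB i).
Proof.
apply: (@los_nat i _ (@hc4 i) (@lc4 i) (@rc4 i) (@Hlr4 i) _ _ 1 (exs i)).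
- by unf4.
- by unf4.
- by rewrite size_map size_iota.
- move=> c cu cv; have cu' : nat_of_ord c != 0 := cu; have cv' : nat_of_ord c != 1 := cv.
  move=> H1 H2; apply: exs_mem; move: H1 H2; unf4; repeat case: ifP => ?; lia.
Qed.

Lemma eBC i : line_of_sight i (@fc4 i) (vB i) (vC i).
Proof.
apply: (@los_nat i _ (@hc4 i) (@lc4 i) (@rc4 i) (@Hlr4 i) _ _ 2 [::]).
- by unf4.
- by unf4.
- by [].
- move=> c cu cv; have cu' : nat_of_ord c != 1 := cu; have cv' : nat_of_ord c != 2 := cv.
  move=> H1 H2; exfalso; move: H1 H2; unf4; repeat case: ifP => ?; lia.
Qed.

Lemma eCD i : line_of_sight i (@fc4 i) (vC i) (vD i).
Proof.
apply: (@los_nat i _ (@hc4 i) (@lc4 i) (@rc4 i) (@Hlr4 i) _ _ 5 [::]).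
- by unf4.
- by unf4.
- by [].
- move=> c cu cv; have cu' : nat_of_ord c != 2 := cu; have cv' : nat_of_ord c != 3 := cv.
  move=> H1 H2; exfalso; move: H1 H2; unf4; repeat case: ifP => ?; lia.
Qed.

Lemma eDA i : line_of_sight i (@fc4 i) (vD i) (vA i).
Proof.
apply: (@los_nat i _ (@hc4 i) (@lc4 i) (@rc4 i) (@Hlr4 i) _ _ 0 [::]).
- by unf4.
- by unf4.
- by [].
- move=> c cu cv; have cu' : nat_of_ord c != 3 := cu; have cv' : nat_of_ord c != 0 := cv.
  move=> H1 H2; exfalso; move: H1 H2; unf4; repeat case: ifP => ?; lia.
Qed.

Lemma nAC i : ~ line_of_sight i (@fc4 i) (vA i) (vC i).
Proof.
apply: (@nonlos_nat i _ (@hc4 i) (@lc4 i) (@rc4 i) (@Hlr4 i) _ _ (vB i :: exs i)).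
- rewrite /= exs_uniq andbT; apply/negP => /exsP //.
- by rewrite /= size_map size_iota.
- move=> w; rewrite inE => /orP[/eqP ->|wE]; first by split => //; unf4; lia.
  have H4 := exsP wE; have Hw := ltn_ord w.
  split.
  + by apply/negP => /eqP E; rewrite E in H4.
  + by apply/negP => /eqP E; rewrite E in H4.
  + unf4; repeat case: ifP => ?; lia.
  + unf4; repeat case: ifP => ?; lia.
  + unf4; repeat case: ifP => ?; lia.
Qed.

Lemma nBD i : ~ line_of_sight i (@fc4 i) (vB i) (vD i).
Proof.
apply: (@nonlos_nat i _ (@hc4 i) (@lc4 i) (@rc4 i) (@Hlr4 i) _ _ (vA i :: exs i)).
- rewrite /= exs_uniq andbT; apply/negP => /exsP //.
- by rewrite /= size_map size_iota.
- move=> w; rewrite inE => /orP[/eqP ->|wE]; first by split => //; unf4; lia.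
  have H4 := exsP wE; have Hw := ltn_ord w.
  split.
  + by apply/negP => /eqP E; rewrite E in H4.
  + by apply/negP => /eqP E; rewrite E in H4.
  + unf4; repeat case: ifP => ?; lia.
  + unf4; repeat case: ifP => ?; lia.
  + unf4; repeat case: ifP => ?; lia.
Qed.

Lemma part_small (i j : nat) : i < j -> exists (T : finType) (e : rel T), simple_graph e /\
      bar_k_visibility_graph i e /\ ~ bar_k_visibility_graph j e.
Proof.
move=> ij; exists ('I_(i.+3).+1 : finType), (@ec4 i); split; [|split].
- split.
  + move=> u v; apply: dec_iff; split => -[H1 H2]; split; by [rewrite eq_sym | apply: los_sym].
  + move=> u; rewrite /ec4; case E: (dec _) => //; move/decP: E => [H _]; by rewrite eqxx in H.
- exists (@fc4 i); split; first exact: disj4.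
  by move=> u v; exact: decP.
- have e1 (u v : 'I_(i.+3).+1) : u != v -> line_of_sight i (@fc4 i) u v -> ec4 u v.
    by move=> uv H; apply/decP.
  have e0 (u v : 'I_(i.+3).+1) : ~ line_of_sight i (@fc4 i) u v -> ~~ ec4 u v.
    by move=> H; apply/negP => /decP [_ /H].
  apply: (@c4_obstruct j _ (@ec4 i) (vA i) (vB i) (vC i) (vD i) (exs i)) => //.
  + by rewrite size_map size_iota.
  + exact: exs_cover.
  + exact: e1 (eAB i).
  + exact: e1 (eBC i).
  + exact: e1 (eCD i).
  + exact: e1 (eDA i).
  + apply: e0; exact: nAC.
  + apply: e0; exact: nBD.
Qed.

Lemma part_big (i j : nat) : i < j -> exists (T : finType) (e : rel T), simple_graph e /\
      bar_k_visibility_graph j e /\ ~ bar_k_visibility_graph i e.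
Proof.
move=> ij; exists ('I_(Nm j).+1 : finType), (fun u v => u != v); split; [|split].
- split; [by move=> u v; rewrite eq_sym | by move=> u; rewrite /= eqxx].
- exists (@fcl j); split.
  + move=> u v uv; apply: mkbar_disj; rewrite /chg => E; move: uv; by rewrite (val_inj E) eqxx.
  + move=> u v; split => [uv|[//]]; split => //.
    case: (ltngtP u v) => H.
    * exact: clique_lt.
    * apply: los_sym; exact: clique_lt.
    * by move: uv; rewrite (val_inj H) eqxx.
- move=> [g [Hd He]]; apply: (@no_big_clique i _ g) => //.
  + rewrite card_ord /Nm; lia.
  + by move=> u v uv; have [_ H] := (He u v).1 uv.
Qed.

Theorem mainTheorem13 (i j : nat) : i <> j ->
  (exists (T : finType) (e : rel T), simple_graph e /\
      bar_k_visibility_graph i e /\ ~ bar_k_visibility_graph j e) /\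
  (exists (T : finType) (e : rel T), simple_graph e /\
      bar_k_visibility_graph j e /\ ~ bar_k_visibility_graph i e).
Proof.
move=> nij; case: (ltngtP i j) => H.
- split; [exact: part_small | exact: part_big].
- split; [exact: part_big | exact: part_small].
- by case: nij; apply/eqP; rewrite H.
Qed.
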